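(* Let $0\le k\le n$ be fixed. Let $\mathcal{G}=\{U^g\mid g\in G=\mathbb{Z}_2^{\times(n-k)}\}$, where $U^e=I^{\otimes n}$, be a Pauli stabilizer group on $\mathcal{H}\simeq(\mathbb{C}^2)^{\otimes n}$, i.e. $-I\notin\mathcal{G}$ and for all $g,h\in G$: $U^g\in\mathcal{P}_n$, $[U^g,U^h]=0$, $U^gU^h=U^{gh}\in\mathcal{G}$, and $U^g=U^h$ iff $g=h$. Then there exists $A\subseteq\{1,\ldots,n\}$ with exactly $k$ elements such that $\pi_A(U^g)=I^{\otimes n}$ if and only if $g=e$, where $\pi_A=\prod_{a\in A}\pi_a$.
   Context: $\mathcal{P}_n$ is the $n$-qubit Pauli group (operators $i^\lambda\mathcal{O}_1\cdots\mathcal{O}_n$, $\lambda\in\{0,1,2,3\}$, $\mathcal{O}_j\in\{I,X,Y,Z\}$ acting on qubit $j$). For $a\in\{1,\ldots,n\}$, $\pi_a:\mathcal{P}_n\to\mathcal{P}_n$ maps $i^\lambda\mathcal{O}_1\cdots\mathcal{O}_{a-1}\mathcal{O}_a\mathcal{O}_{a+1}\cdots\mathcal{O}_n$ to $\mathcal{O}_1\cdots\mathcal{O}_{a-1}I\mathcal{O}_{a+1}\cdots\mathcal{O}_n$, i.e. it replaces the $a$-th letter by the identity and removes any prefactor other than $1$. *)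

(* Defs.v *)
From HB Require Import structures.
From mathcomp Require Import all_boot all_algebra.
Set Implicit Arguments. Unset Strict Implicit. Unset Printing Implicit Defensive.
Import GRing.Theory.
Local Open Scope ring_scope.

Inductive pauli := PI | PX | PY | PZ.

Definition pauli_to_nat (p : pauli) : nat :=
  match p with PI => 0 | PX => 1 | PY => 2 | PZ => 3 end.
Definition nat_to_pauli (k : nat) : pauli :=
  match k with 0 => PI | 1 => PX | 2 => PY | _ => PZ end.
Lemma pauli_natK : cancel pauli_to_nat nat_to_pauli. Proof. by case. Qed.
HB.instance Definition _ := Equality.copy pauli (can_type pauli_natK).

(* product of single-qubit Paulis: P * Q = i^(fst) * (snd) *)
Definition mulP1 (p q : pauli) : nat * pauli :=
  match p, q with
  | PI, r | r, PI => (0%N, r)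
  | PX, PX | PY, PY | PZ, PZ => (0%N, PI)
  | PX, PY => (1%N, PZ) | PY, PX => (3%N, PZ)
  | PY, PZ => (1%N, PX) | PZ, PY => (3%N, PX)
  | PZ, PX => (1%N, PY) | PX, PZ => (3%N, PY)
  end.

(* an element i^phase O_1 ... O_n of the n-qubit Pauli group P_n *)
Record pauliop (n : nat) := PauliOp { phase : 'Z_4 ; letters : {ffun 'I_n -> pauli} }.

Definition pmul (n : nat) (u v : pauliop n) : pauliop n :=
  PauliOp (phase u + phase v + \sum_(j < n) ((mulP1 (letters u j) (letters v j)).1)%:R)
          [ffun j => (mulP1 (letters u j) (letters v j)).2].

Definition pid (n : nat) : pauliop n := PauliOp 0 [ffun _ => PI].
Definition pminus_id (n : nat) : pauliop n := PauliOp 2%:R [ffun _ => PI].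

Definition pi_a (n : nat) (a : 'I_n) (u : pauliop n) : pauliop n :=
  PauliOp 0 [ffun j => if j == a then PI else letters u j].

Definition pi_A (n : nat) (A : {set 'I_n}) (u : pauliop n) : pauliop n :=
  foldr (@pi_a n) u (enum A).

(* Main.v *)
Require Import Defs.
From mathcomp Require Import all_boot all_algebra.
From mathcomp Require Import zify.
Local Open Scope ring_scope.
Import GRing.Theory.

Lemma pi_A_letters n (s : seq 'I_n) u j :
  letters (foldr (@pi_a n) u s) j = if j \in s then PI else letters u j.
Proof.
elim: s => [|a s IH] //=. rewrite ffunE in_cons IH. by case: (j == a).
Qed.

Lemma subset_card (T : finType) (S : {set T}) k :
  (k <= #|S|)%N -> exists A : {set T}, A \subset S /\ #|A| = k.
Proof.
elim: k => [|k IH] hk; first by exists set0; rewrite sub0set cards0.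
have [A [AS cA]] := IH (ltnW hk).
have : (0 < #|S :\: A|)%N by rewrite cardsD (setIidPr AS) cA subn_gt0.
case/card_gt0P => x; rewrite inE => /andP [xA xS].
exists (x |: A); split; first by rewrite subUset sub1set xS AS.
by rewrite cardsU1 xA cA.
Qed.

Lemma addvv m (x : 'rV['F_2]_m) : x + x = 0.
Proof.
apply/matrixP => i j; rewrite !mxE; case: (x i j) => [[|[|q]] Hq] //; by apply/val_inj.
Qed.

Lemma half_card (m : nat) (K K' : {set 'rV['F_2]_m}) :
  K' \subset K -> (forall x y, x \in K' -> y \in K' -> x + y \in K') ->
  (forall x y, x \in K -> y \in K -> x + y \in K) ->
  forall h, h \in K -> h \notin K' -> (#|K'| + #|K'| <= #|K|)%N.
Proof.
move=> sub addK' addK h hK hK'.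
have inj : injective (fun x => x + h) by apply: addIr.
set I := [set x + h | x in K'].
have cI : #|I| = #|K'| by rewrite card_imset.
have dis : K' :&: I = set0.
  apply/setP => y; rewrite !inE; apply/negP => /andP [yK' /imsetP [x xK' Ey]].
  rewrite Ey in yK'; move: (addK' _ _ xK' yK'); rewrite addrA addvv add0r.
  by rewrite (negbTE hK').
have cU : (#|K'| + #|I| = #|K' :|: I|)%N.
  by rewrite cardsU dis cards0 subn0.
rewrite -{2}cI cU.
apply: subset_leq_card; rewrite subUset sub; apply/subsetP => y /imsetP [x xK' ->].
by apply: addK => //; apply: (subsetP sub).
Qed.

Theorem mainTheorem13 (n k : nat) (hk : (k <= n)%N)
  (U : 'rV['F_2]_(n - k) -> pauliop n)
  (He : U 0 = pid n)
  (HminusI : forall g, U g <> pminus_id n)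
  (Hcomm : forall g h, pmul (U g) (U h) = pmul (U h) (U g))
  (Hhom : forall g h, pmul (U g) (U h) = U (g + h))
  (Hinj : forall g h, U g = U h <-> g = h) :
  exists A : {set 'I_n}, #|A| = k /\
    (forall g, pi_A A (U g) = pid n <-> g = 0).
Proof.
pose K (B : {set 'I_n}) := [set g : 'rV['F_2]_(n - k) | [forall j in B, letters (U g) j == PI]].
have Kadd B : forall x y, x \in K B -> y \in K B -> x + y \in K B.
  move=> x y; rewrite !inE => /forall_inP Hx /forall_inP Hy; apply/forall_inP => j jB.
  by rewrite -Hhom /pmul ffunE (eqP (Hx j jB)) (eqP (Hy j jB)).
have K0 : forall g, (forall j, letters (U g) j = PI) -> g = 0.
  move=> g Hg.
  have H2 : pmul (U g) (U g) = pid n by rewrite Hhom addvv He.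
  case E : (U g) => [p L].
  have EL : L = [ffun _ => PI] by apply/ffunP => j; rewrite ffunE; by move: (Hg j); rewrite E.
  rewrite E EL in H2.
  move: (congr1 (@phase n) H2) => /=.
  rewrite big1 ?addr0; last by move=> j _; rewrite ffunE.
  move=> Hp; clear H2.
  apply/Hinj; rewrite He E EL.
  move: Hp; case: p E => [[|[|[|[|q]]]] Hq] E //=.
  - by move=> _; congr PauliOp; apply/val_inj.
  - by move=> _; exfalso; apply: (HminusI g); rewrite E EL; congr PauliOp; apply/val_inj.
have step : forall j, (j <= n - k)%N ->
    exists B : {set 'I_n}, (#|B| <= j)%N /\ (#|K B| * 2 ^ j <= 2 ^ (n - k))%N.
  elim => [|j IH] hj.
    exists set0; rewrite cards0 expn0 muln1; split => //.
    apply: leq_trans (max_card _) _.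
    by rewrite card_mx card_Fp // mul1n.
  have [B [cB HB]] := IH (ltnW hj).
  case: (pickP (fun g => (g \in K B) && (g != 0))) => [g /andP [gK gn0] | Hn].
    case: (pickP (fun q => letters (U g) q != PI)) => [q Hq | Hq]; last first.
      by exfalso; move/eqP: gn0; apply; apply: K0 => q; move: (Hq q) => /negbFE/eqP.
    exists (q |: B); split.
      by rewrite cardsU1; move: cB; case: (q \notin B) => /=; lia.
    have sub : K (q |: B) \subset K B.
      apply/subsetP => x; rewrite !inE => /forall_inP Hx; apply/forall_inP => i iB.
      by apply: Hx; rewrite inE iB orbT.
    have gn : g \notin K (q |: B).
      rewrite inE; apply/negP => /forall_inP Hx.
      by move: (Hx q (setU11 _ _)) => /eqP; apply/eqP.
    have := @half_card _ _ _ sub (Kadd _) (Kadd _) _ gK gn.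
    move=> h; apply: leq_trans HB; rewrite expnS mulnA (mulnC _ 2) mul2n -addnn; exact: leq_mul h (leqnn _).
  exists B; split; first by lia.
  have : (#|K B| <= 1)%N.
    apply/card_le1_eqP => x y xK yK.
    have hx := Hn x; have hy := Hn y; rewrite xK /= in hx; rewrite yK /= in hy.
    by rewrite (eqP (negbFE hx)) (eqP (negbFE hy)).
  have : (2 ^ j.+1 <= 2 ^ (n - k))%N by rewrite leq_exp2l.
  nia.
have [B [cB HB]] := step (n - k)%N (leqnn _).
have KB : forall g, g \in K B -> g = 0.
  have : (#|K B| <= 1)%N.
    by move: HB; rewrite -{2}(mul1n (2 ^ (n - k))%N) leq_pmul2r // expn_gt0.
  move/card_le1_eqP => H1 g gK.
  have z : 0 \in K B by rewrite inE; apply/forall_inP => j _; rewrite He ffunE.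
  exact: H1.
have : (k <= #|~: B|)%N.
  by rewrite cardsCs setCK card_ord; lia.
case/subset_card => A [AB cA].
exists A; split => // g; split.
  move=> H; apply: KB; rewrite inE; apply/forall_inP => j jB.
  move: (congr1 (fun u => letters u j) H) => /=.
  rewrite pi_A_letters mem_enum ffunE.
  have -> : (j \in A) = false.
    by apply/negP => /(subsetP AB); rewrite inE jB.
  by move=> ->.
move=> ->; rewrite He /pi_A.
case: (enum A) => [|a s] //=.
congr PauliOp; apply/ffunP => j; rewrite !ffunE; case: ifP => // _.
by rewrite pi_A_letters ffunE; case: ifP.
Qed.
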